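(* Let $y\in\tilde W$ and $s\in\tilde{\mathbb S}$ with $\ell(sy\delta(s))=\ell(y)$. If $y\mathbf a$ is a $(J,w,\delta)$-alcove (for some $J\subset\mathbb S$ with $\delta(J)=J$ and $w\in W$), then $sy\delta(s)\mathbf a$ is a $(J,\bar sw,\delta)$-alcove, where $\bar s$ is the image of $s$ in $W$.
   Context: Let $\tilde W=X_*(T)_\Gamma\rtimes W$ be the Iwahori–Weyl group of a quasi-split connected semisimple group $G$ over a local field $F$ (finite extension of $\mathbb Q_p$ or $\mathbb F_q((\epsilon))$) split over a tamely ramified extension, relative to a maximal $L$-split torus $S$ defined over $F$ with centralizer $T$, where $L$ is the completion of the maximal unramified extension of $F$ and $\Gamma=\mathrm{Gal}(\bar L/L)$. $\delta$ is the automorphism of $\tilde W$ (and of $W$) induced by the Frobenius of $L/F$. $V=X_*(T)_\Gamma\otimes\mathbb R$; $\Sigma$ is the reduced root system with affine roots $v\mapsto\langle a,v\rangle+k$ ($a\in\Sigma,k\in\mathbb Z$), $H_{a,k}=\{v:\langle a,v\rangle=k\}$, $W=W(\Sigma)$. $\mathbf a$ is a fixed $\sigma$-stable base alcove lying in the anti-dominant chamber; $\ell$ is the length function on $\tilde W$ (number of affine root hyperplanes separating $x\mathbf a$ from $\mathbf a$); $\tilde{\mathbb S}$ the simple affine reflections; $\mathbb S$ the simple roots/simple reflections of $W$ determined by the chamber; $\Sigma^+$ positive roots; for $J\subset\mathbb S$, $\Sigma_J$ roots spanned by $J$, $\Sigma_J^+=\Sigma_J\cap\Sigma^+$, $W_J$,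 $\tilde W_J=X_*(T)_\Gamma\rtimes W_J$. For an alcove $\mathbf b$ and $a\in\Sigma$, $k(a,\mathbf b)$ is the integer $k$ with $\mathbf b$ between $H_{a,k}$ and $H_{a,k-1}$. $x\mathbf a$ is a $(J,w,\delta)$-alcove if (1) $w^{-1}x\delta(w)\in\tilde W_J$ and (2) $k(a,x\mathbf a)\ge k(a,\mathbf a)$ for all $a\in w(\Sigma^+\setminus\Sigma_J^+)$ (this is equivalent to the group-theoretic condition $\mathbf U_a(L)\cap xIx^{-1}\subseteq\mathbf U_a(L)\cap I$ for root subgroups, with $I$ the Iwahori of $\mathbf a$). *)

(* Defs.v *)
From HB Require Import structures.
From mathcomp Require Import all_boot all_order all_algebra.
From mathcomp Require Import reals.
Set Implicit Arguments. Unset Strict Implicit. Unset Printing Implicit Defensive.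
Import Order.TTheory GRing.Theory Num.Theory.
Local Open Scope ring_scope.

(* V = R^n as column vectors 'cV_n; V^* = row vectors 'rV_n;
   pairing <a, v> = a *m v. *)
Definition pairing (R : realType) (n : nat) (a : 'rV[R]_n) (v : 'cV[R]_n) : R :=
  (a *m v) 0 0.

Definition reflmx (R : realType) (n : nat) (a : 'rV[R]_n) (av : 'cV[R]_n)
  : 'M[R]_n := 1%:M - av *m a.

Inductive genW (R : realType) (n : nat) (cor : 'rV[R]_n -> 'cV[R]_n)
    (P : 'rV[R]_n -> Prop) : 'M[R]_n -> Prop :=
  | genW1 : genW cor P 1%:M
  | genWS a w : P a -> genW cor P w -> genW cor P (reflmx a (cor a) *m w).

(* Data: reduced root system Sigma (roots) with coroots (cor) in V^* / V,
   the image Lambda (lat) of X_*(T)_Gamma in V, the linear action theta of the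
   Frobenius on V, and a point basept of the base alcove a. *)
Record AffRootData (R : realType) (n : nat) := {
  roots : seq 'rV[R]_n;
  cor : 'rV[R]_n -> 'cV[R]_n;
  lat : 'cV[R]_n -> Prop;
  theta : 'M[R]_n;
  basept : 'cV[R]_n;
  roots_uniq : uniq roots;
  pairing_cor : forall a, a \in roots -> pairing a (cor a) = 2;
  roots_refl : forall a b, a \in roots -> b \in roots ->
                 b *m reflmx a (cor a) \in roots;
  cor_refl : forall a b, a \in roots -> b \in roots ->
                 cor (b *m reflmx a (cor a)) = reflmx a (cor a) *m cor b;
  roots_int : forall a b, a \in roots -> b \in roots ->
                 pairing b (cor a) \is a Num.int;
  roots_reduced : forall a (c : R), a \in roots -> c *: a \in roots ->
                 c = 1 \/ c = -1;
  roots_span : forall v, (forall a, a \in roots -> pairing a v = 0) -> v = 0;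
  lat0 : lat 0;
  latD : forall u v, lat u -> lat v -> lat (u + v);
  latN : forall u, lat u -> lat (- u);
  lat_cor : forall a, a \in roots -> lat (cor a);
  lat_W : forall w u, genW cor (fun a => a \in roots) w -> lat u -> lat (w *m u);
  lat_int : forall u a, lat u -> a \in roots -> pairing a u \is a Num.int;
  (* base alcove a: the alcove containing basept; it lies in the
     anti-dominant chamber and its closure contains the origin *)
  basept_generic : forall a, a \in roots -> pairing a basept \isn't a Num.int;
  basept_small : forall a, a \in roots -> -1 < pairing a basept < 1;
  theta_unit : theta \in unitmx;
  theta_roots : forall a, (a \in roots) = (a *m invmx theta \in roots);
  theta_cor : forall a, a \in roots -> cor (a *m invmx theta) = theta *m cor a;
  theta_lat : forall u, lat u <-> lat (theta *m u);
  theta_alcove : forall a, a \in roots ->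
     Num.floor (pairing a (theta *m basept)) = Num.floor (pairing a basept)
}.

Section Defs.
Variables (R : realType) (n : nat) (D : AffRootData R n).

Definition inRoots (a : 'rV[R]_n) : Prop := a \in roots D.
Definition inW (w : 'M[R]_n) : Prop := genW (cor D) inRoots w.
Definition inWJ (J : seq 'rV[R]_n) (w : 'M[R]_n) : Prop :=
  genW (cor D) (fun a => a \in J) w.

(* Iwahori-Weyl group elements as affine maps v |-> x.1 *m v + x.2 *)
Definition Wt := ('M[R]_n * 'cV[R]_n)%type.
Definition inWt (x : Wt) : Prop := inW x.1 /\ lat D x.2.
Definition act (x : Wt) (v : 'cV[R]_n) : 'cV[R]_n := x.1 *m v + x.2.
Definition mulWt (x y : Wt) : Wt := (x.1 *m y.1, x.1 *m y.2 + x.2).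
Definition deltaW (w : 'M[R]_n) : 'M[R]_n := theta D *m w *m invmx (theta D).
Definition delta (x : Wt) : Wt := (deltaW x.1, theta D *m x.2).

(* positive roots: those negative on the (anti-dominant) base alcove *)
Definition posroot (a : 'rV[R]_n) : bool :=
  (a \in roots D) && (pairing a (basept D) < 0).
Definition simpleroot (a : 'rV[R]_n) : Prop :=
  posroot a /\ ~ (exists b c, [/\ posroot b, posroot c & a = b + c]).
Definition in_spanJ (J : seq 'rV[R]_n) (a : 'rV[R]_n) : Prop :=
  exists c : 'rV[R]_n -> R, a = \sum_(b <- J) c b *: b.

(* k(a, b) for the alcove b containing the generic point v:
   b lies between H_{a,k} and H_{a,k-1} *)
Definition kval (a : 'rV[R]_n) (v : 'cV[R]_n) : int := Num.floor (pairing a v) + 1.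
Definition kalc (a : 'rV[R]_n) (x : Wt) : int := kval a (act x (basept D)).

(* length: number of hyperplanes H_{a,k} (a positive, k in Z) separating
   x a from a *)
Definition len (x : Wt) : nat :=
  \sum_(a <- roots D | posroot a)
     `|Num.floor (pairing a (act x (basept D))) - Num.floor (pairing a (basept D))|%N.

(* H_{a,k} is a wall of the base alcove: it meets the closure of a in a
   point lying on no other affine root hyperplane *)
Definition wall (a : 'rV[R]_n) (k : int) : Prop :=
  a \in roots D /\
  exists q : 'cV[R]_n,
    [/\ pairing a q = k%:~R,
        (forall b, b \in roots D ->
           (Num.floor (pairing b (basept D)))%:~R <= pairing b q <=
           (Num.floor (pairing b (basept D)))%:~R + 1)
      & (forall b (m : int), b \in roots D -> pairing b q = m%:~R ->
           (b = a /\ m = k) \/ (b = - a /\ m = - k))].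

Definition saff (a : 'rV[R]_n) (k : int) : Wt :=
  (reflmx a (cor D a), k%:~R *: cor D a).
Definition simple_aff (s : Wt) : Prop :=
  exists a k, wall a k /\ s = saff a k.

Definition JW_alcove (J : seq 'rV[R]_n) (w : 'M[R]_n) (x : Wt) : Prop :=
  inWJ J (invmx w *m x.1 *m deltaW w) /\
  (forall b, posroot b -> ~ in_spanJ J b ->
     kalc (b *m invmx w) (1%:M, 0) <= kalc (b *m invmx w) x).

End Defs.

(* Main.v *)
Require Import Defs.
From HB Require Import structures.
From mathcomp Require Import all_boot all_order all_algebra.
From mathcomp Require Import reals.
From mathcomp Require Import ring lra zify.
Require Import Defs.
Set Implicit Arguments. Unset Strict Implicit. Unset Printing Implicit Defensive.
Import Order.TTheory GRing.Theory Num.Theory.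
Local Open Scope ring_scope.

Section Basics.
Variables (R : realType) (n : nat).
Implicit Types (a b : 'rV[R]_n) (u v : 'cV[R]_n) (M : 'M[R]_n).

Lemma pairing_mulmx a M v : pairing (a *m M) v = pairing a (M *m v).
Proof. by rewrite /pairing mulmxA. Qed.
Lemma pairingDl a b v : pairing (a + b) v = pairing a v + pairing b v.
Proof. by rewrite /pairing mulmxDl mxE. Qed.
Lemma pairingDr a u v : pairing a (u + v) = pairing a u + pairing a v.
Proof. by rewrite /pairing mulmxDr mxE. Qed.
Lemma pairingNl a v : pairing (- a) v = - pairing a v.
Proof. by rewrite /pairing mulNmx mxE. Qed.
Lemma pairingNr a v : pairing a (- v) = - pairing a v.
Proof. by rewrite /pairing mulmxN mxE. Qed.
Lemma pairingBl a b v : pairing (a - b) v = pairing a v - pairing b v.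
Proof. by rewrite pairingDl pairingNl. Qed.
Lemma pairingBr a u v : pairing a (u - v) = pairing a u - pairing a v.
Proof. by rewrite pairingDr pairingNr. Qed.
Lemma pairingZl (c : R) a v : pairing (c *: a) v = c * pairing a v.
Proof. by rewrite /pairing -scalemxAl mxE. Qed.
Lemma pairingZr (c : R) a v : pairing a (c *: v) = c * pairing a v.
Proof. by rewrite /pairing -scalemxAr mxE. Qed.
Lemma pairing0l v : pairing (0 : 'rV_n) v = 0.
Proof. by rewrite /pairing mul0mx mxE. Qed.
Lemma pairing0r a : pairing a (0 : 'cV_n) = 0.
Proof. by rewrite /pairing mulmx0 mxE. Qed.

Lemma mx11_pairing a v : a *m v = (pairing a v)%:M.
Proof. exact: mx11_scalar. Qed.

Lemma reflmx_row a av b : b *m reflmx a av = b - pairing b av *: a.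
Proof.
by rewrite /reflmx mulmxBr mulmx1 mulmxA mx11_pairing mul_scalar_mx.
Qed.
Lemma reflmx_col a av u : reflmx a av *m u = u - pairing a u *: av.
Proof.
by rewrite /reflmx mulmxBl mul1mx -mulmxA mx11_pairing mul_mx_scalar.
Qed.

Lemma reflmxK a av : pairing a av = 2 -> reflmx a av *m reflmx a av = 1%:M.
Proof.
move=> H2; rewrite {2}/reflmx mulmxBr mulmx1 mulmxA reflmx_col H2.
have -> : av - 2 *: av = - av by apply/matrixP=> i j; rewrite !mxE; ring.
by rewrite mulNmx opprK /reflmx subrK.
Qed.

End Basics.

Lemma invmx_uniq (R : comUnitRingType) k (X Y : 'M[R]_k) : X *m Y = 1%:M -> invmx X = Y.
Proof.
move=> H; have [uX _] := mulmx1_unit H.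
by rewrite -[RHS](mulKmx uX) H mulmx1.
Qed.

Lemma invmxM (R : comUnitRingType) k (X Y : 'M[R]_k) : X \in unitmx -> Y \in unitmx ->
  invmx (X *m Y) = invmx Y *m invmx X.
Proof.
move=> uX uY; apply: invmx_uniq.
by rewrite mulmxA -[X *m Y *m _]mulmxA mulmxV // mulmx1 mulmxV.
Qed.

Section RD.
Variables (R : realType) (n : nat) (D : AffRootData R n).
Local Notation rts := (roots D).
Local Notation cr := (cor D).
Local Notation Th := (theta D).
Local Notation bp := (basept D).
Implicit Types (a b : 'rV[R]_n) (u v : 'cV[R]_n) (M : 'M[R]_n).

Definition rfl a := reflmx a (cr a).

Lemma reflK a : a \in rts -> rfl a *m rfl a = 1%:M.
Proof. by move=> Ha; apply: reflmxK; apply: pairing_cor. Qed.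

Lemma refl_unit a : a \in rts -> rfl a \in unitmx.
Proof. by move=> Ha; case: (mulmx1_unit (reflK Ha)). Qed.

Lemma refl_inv a : a \in rts -> invmx (rfl a) = rfl a.
Proof. by move=> Ha; apply: invmx_uniq; apply: reflK. Qed.

Lemma roots_neg a : a \in rts -> - a \in rts.
Proof.
move=> Ha; have := roots_refl Ha Ha; rewrite reflmx_row (pairing_cor Ha).
suff -> : a - 2 *: a = - a by [].
by apply/matrixP=> i j; rewrite !mxE; ring.
Qed.

Lemma roots_nz a : a \in rts -> a != 0.
Proof.
move=> Ha; apply/eqP=> a0; have := pairing_cor Ha; rewrite a0 pairing0l.
by move/eqP; rewrite eq_sym pnatr_eq0.
Qed.

Section GenW.
Variable P : 'rV[R]_n -> Prop.
Hypothesis HP : forall a, P a -> a \in rts.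

Lemma genW_unit M : genW cr P M -> M \in unitmx.
Proof.
elim=> [|a w Pa _ uw]; first exact: unitmx1.
by rewrite unitmx_mul refl_unit ?HP.
Qed.

Lemma genW_mul M1 M2 : genW cr P M1 -> genW cr P M2 -> genW cr P (M1 *m M2).
Proof.
move=> H1 H2; elim: H1 => [|a w Pa _ IH]; first by rewrite mul1mx.
by rewrite -mulmxA; apply: genWS.
Qed.

Lemma genW_gen a : P a -> genW cr P (rfl a).
Proof. by move=> Pa; rewrite -[rfl a]mulmx1; apply: genWS => //; apply: genW1. Qed.

Lemma genW_inv M : genW cr P M -> genW cr P (invmx M).
Proof.
elim=> [|a w Pa Hw IH]; first by rewrite invmx1; apply: genW1.
rewrite invmxM ?refl_unit ?HP ?(genW_unit Hw) // refl_inv ?HP //.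
by apply: genW_mul => //; apply: genW_gen.
Qed.

Lemma genW_roots M b : genW cr P M -> b \in rts -> b *m M \in rts.
Proof.
move=> HM; elim: HM b => [|a w Pa _ IH] b Hb; first by rewrite mulmx1.
by rewrite mulmxA; apply: IH; apply: roots_refl => //; apply: HP.
Qed.

End GenW.

Lemma inW_unit M : inW D M -> M \in unitmx.
Proof. exact: genW_unit. Qed.
Lemma inW_roots M b : inW D M -> b \in rts -> b *m M \in rts.
Proof. exact: genW_roots. Qed.
Lemma inW_inv M : inW D M -> inW D (invmx M).
Proof. exact: genW_inv. Qed.
Lemma inW_mul M1 M2 : inW D M1 -> inW D M2 -> inW D (M1 *m M2).
Proof. exact: genW_mul. Qed.

Lemma inW_rootsV M b : inW D M -> b \in rts -> b *m invmx M \in rts.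
Proof. by move=> HM; apply: inW_roots; apply: inW_inv. Qed.

Lemma Th_unit : Th \in unitmx. Proof. exact: theta_unit. Qed.

Lemma roots_Th a : (a *m Th \in rts) = (a \in rts).
Proof. by rewrite (theta_roots D (a *m Th)) mulmxK // theta_unit. Qed.
Lemma roots_ThV a : (a *m invmx Th \in rts) = (a \in rts).
Proof. by rewrite (theta_roots D a). Qed.

Lemma deltaW_mul M1 M2 : deltaW D (M1 *m M2) = deltaW D M1 *m deltaW D M2.
Proof.
rewrite /deltaW !mulmxA; congr (_ *m _).
by rewrite -[Th *m M1 *m invmx Th *m Th]mulmxA mulVmx ?theta_unit // mulmx1.
Qed.

Lemma deltaW_refl a : a \in rts -> deltaW D (rfl a) = rfl (a *m invmx Th).
Proof.
move=> Ha; rewrite /deltaW /rfl /reflmx theta_cor //.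
rewrite mulmxBr mulmx1 mulmxBl mulmxV ?theta_unit //.
by rewrite !mulmxA.
Qed.

Lemma inW_delta M : inW D M -> inW D (deltaW D M).
Proof.
elim=> [|a w Ha _ IH].
  by rewrite /deltaW mulmx1 mulmxV ?theta_unit //; apply: genW1.
rewrite deltaW_mul deltaW_refl //; apply: genWS => //.
by rewrite /inRoots roots_ThV.
Qed.

End RD.

Lemma intrD1 (R : pzRingType) (m : int) : (m + 1)%:~R = m%:~R + 1 :> R.
Proof. by rewrite intrD. Qed.

Lemma floorN_gen (R : realType) (r : R) : r \isn't a Num.int ->
  Num.floor (- r) = - Num.floor r - 1.
Proof.
move=> Hr; rewrite floorNceil opprK ceil_floor Hr /=.
by rewrite opprD.
Qed.

Section RD3.
Variables (R : realType) (n : nat) (D : AffRootData R n).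
Local Notation rts := (roots D).
Local Notation cr := (cor D).
Local Notation Th := (theta D).
Local Notation bp := (basept D).
Implicit Types (a b : 'rV[R]_n) (u v : 'cV[R]_n) (M : 'M[R]_n) (x y : Wt R n).

Definition F b v : int := Num.floor (pairing b v).

Lemma act_mul x y v : act (mulWt x y) v = act x (act y v).
Proof. by rewrite /act /mulWt /= mulmxDr mulmxA addrA. Qed.

Lemma act1 v : act (1%:M, 0) v = v.
Proof. by rewrite /act /= mul1mx addr0. Qed.

Lemma inWt1 : inWt D (1%:M, 0).
Proof. by split; [apply: genW1 | apply: lat0]. Qed.

Lemma inWt_mul x y : inWt D x -> inWt D y -> inWt D (mulWt x y).
Proof.
move=> [Hx1 Hx2] [Hy1 Hy2]; split; first exact: inW_mul.
by apply: latD => //; apply: lat_W.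
Qed.

Lemma lat_zint u (k : int) : lat D u -> lat D (k%:~R *: u).
Proof.
move=> Hu; have HP m : lat D (m%:R *: u).
  elim: m => [|m IH]; first by rewrite scale0r; apply: lat0.
  by rewrite -natr1 scalerDl scale1r; apply: latD.
case: k => m; first exact: HP.
by rewrite NegzE mulrNz scaleNr; apply: latN; apply: HP.
Qed.

Lemma inWt_saff a k : a \in rts -> inWt D (saff D a k).
Proof.
move=> Ha; split; first by apply: genW_gen.
by apply: lat_zint; apply: lat_cor.
Qed.

Lemma inWt_delta x : inWt D x -> inWt D (delta D x).
Proof.
move=> [H1 H2]; split; first exact: inW_delta.
exact: (proj1 (theta_lat D x.2)).
Qed.

Lemma pair_int b u : b \in rts -> lat D u -> pairing b u \is a Num.int.
Proof. by move=> Hb Hu; exact: (lat_int Hu Hb). Qed.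

Lemma F_act x b v : inWt D x -> b \in rts ->
  F b (act x v) = F (b *m x.1) v + Num.floor (pairing b x.2).
Proof.
move=> [H1 H2] Hb; rewrite /F /act pairingDr pairing_mulmx floorDrz //.
exact: pair_int.
Qed.

Lemma generic x b : inWt D x -> b \in rts -> pairing b (act x bp) \isn't a Num.int.
Proof.
move=> [H1 H2] Hb; apply/negP => Hi.
have Hb1 : b *m x.1 \in rts by apply: inW_roots.
move/negP: (basept_generic Hb1); apply.
have -> : pairing (b *m x.1) bp = pairing b (act x bp) - pairing b x.2.
  by rewrite /act pairingDr pairing_mulmx addrK.
by apply: rpredB => //; apply: pair_int.
Qed.

Lemma F_neg x b : inWt D x -> b \in rts -> F (- b) (act x bp) = - F b (act x bp) - 1.
Proof. by move=> Hx Hb; rewrite /F pairingNl floorN_gen // generic. Qed.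

Lemma bp_act : bp = act (1%:M, 0) bp. Proof. by rewrite act1. Qed.

Lemma F_neg0 b : b \in rts -> F (- b) bp = - F b bp - 1.
Proof. by move=> Hb; rewrite bp_act F_neg //; apply: inWt1. Qed.

Lemma F_bp_pos b : posroot D b -> F b bp = -1.
Proof.
case/andP=> Hb Hneg; rewrite /F; apply: floor_def.
by have := basept_small Hb; case/andP=> H1 _; rewrite ltW //=.
Qed.

Lemma pair_bp_nz b : b \in rts -> pairing b bp != 0.
Proof.
move=> Hb; apply/eqP=> H0; move/negP: (basept_generic Hb); apply.
by rewrite H0 rpred0.
Qed.

Lemma posrootN b : b \in rts -> posroot D (- b) = ~~ posroot D b.
Proof.
move=> Hb; rewrite /posroot roots_neg // Hb pairingNl /= oppr_lt0 -leNgt.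
by rewrite le_eqVlt eq_sym (negbTE (pair_bp_nz Hb)).
Qed.

End RD3.

Lemma small_lim (R : realType) (x0 d Mr : R) :
  (forall e, 0 < e -> e <= 1 -> Mr <= x0 + e * d < Mr + 1) -> Mr <= x0 <= Mr + 1.
Proof.
move=> H; apply/andP; split; rewrite leNgt; apply/negP=> Hx.
  pose e := Num.min 1 ((Mr - x0) / (`|d| + 1)).
  have Hd : 0 < `|d| + 1 by rewrite ltr_pwDr.
  have He0 : 0 < e by rewrite lt_min ltr01 divr_gt0 // subr_gt0.
  have He1 : e <= 1 by rewrite ge_min lexx.
  have He2 : e * (`|d| + 1) <= Mr - x0.
    by rewrite -ler_pdivlMr // ge_min lexx orbT.
  have Hn1 : d <= `|d| := ler_norm d.
  have Hn2 : - d <= `|d| by rewrite -normrN ler_norm.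
  have He3 : e * d <= e * `|d| by nra.
  have := H e He0 He1; case/andP=> H1 _; lra.
pose e := Num.min 1 ((x0 - Mr - 1) / (`|d| + 1)).
have Hd : 0 < `|d| + 1 by rewrite ltr_pwDr.
have Hx' : 0 < x0 - Mr - 1 by lra.
have He0 : 0 < e by rewrite lt_min ltr01 divr_gt0.
have He1 : e <= 1 by rewrite ge_min lexx.
have He2 : e * (`|d| + 1) <= x0 - Mr - 1.
  by rewrite -ler_pdivlMr // ge_min lexx orbT.
have Hn1 : d <= `|d| := ler_norm d.
have Hn2 : - d <= `|d| by rewrite -normrN ler_norm.
have He3 : - (e * `|d|) <= e * d by nra.
have := H e He0 He1; case/andP=> _ H2; lra.
Qed.

Section Wall.
Variables (R : realType) (n : nat) (D : AffRootData R n).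
Local Notation rts := (roots D).
Local Notation cr := (cor D).
Local Notation Th := (theta D).
Local Notation bp := (basept D).
Implicit Types (a b : 'rV[R]_n) (u v : 'cV[R]_n) (M : 'M[R]_n) (x y : Wt R n).

Variables (al : 'rV[R]_n) (k : int).
Hypothesis Hwall : wall D al k.
Local Notation s := (saff D al k).

Lemma al_root : al \in rts. Proof. by case: Hwall. Qed.

Lemma inWt_s : inWt D s. Proof. exact: inWt_saff al_root. Qed.

Lemma act_s_fix q : pairing al q = k%:~R -> act s q = q.
Proof.
move=> Hq; rewrite /act /saff /= reflmx_col Hq.
by rewrite subrK.
Qed.

Lemma act_s_aff q v e : act s q = q -> act s (q + e *: (v - q)) = q + e *: (act s v - q).
Proof.
move=> Hq; rewrite /act /= in Hq *; rewrite mulmxDr -scalemxAr mulmxBr -[in RHS]Hq.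
apply/matrixP=> i j; rewrite !mxE; ring.
Qed.

Lemma alcove_conv q e c : 0 < e -> e <= 1 ->
  (forall b, b \in rts -> (F b bp)%:~R <= pairing b q <= (F b bp)%:~R + 1) ->
  c \in rts -> F c (q + e *: (bp - q)) = F c bp.
Proof.
move=> He0 He1 Hq Hc; rewrite {1}/F; apply: floor_def.
rewrite pairingDr pairingZr pairingBr.
have /andP[Hq1 Hq2] := Hq c Hc.
have /andP[Hb1 Hb2] := floor_itv (pairing c bp).
have Hb3 : (F c bp)%:~R != pairing c bp.
  apply/eqP=> Heq; move/negP: (basept_generic Hc); apply.
  by rewrite -Heq intr_int.
rewrite /F in Hq1 Hq2 Hb3 *; set f := Num.floor (pairing c bp) in Hq1 Hq2 Hb1 Hb2 Hb3 *.
rewrite intrD in Hb2 *.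
have Hb1' : f%:~R < pairing c bp by rewrite lt_neqAle Hb3 Hb1.
set x := pairing c q in Hq1 Hq2 *; set y := pairing c bp in Hb1' Hb2 *.
have P1 : 0 <= (1 - e) * (x - f%:~R) by rewrite mulr_ge0 // subr_ge0.
have P2 : 0 < e * (y - f%:~R) by rewrite mulr_gt0 // subr_gt0.
have P3 : 0 <= (1 - e) * (f%:~R + 1 - x) by rewrite mulr_ge0 // subr_ge0.
have P4 : 0 < e * (f%:~R + 1 - y) by rewrite mulr_gt0 // subr_gt0.
apply/andP; split; nra.
Qed.

Definition sig b : int := F b (act s bp) - F b bp.

Lemma wall_F b : b \in rts -> b != al -> b != - al -> sig b = 0.
Proof.
move=> Hb Hba Hbna; apply/eqP; rewrite /sig subr_eq0; apply/eqP.
case: Hwall => _ [q [Hq Hcl Huniq]].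
have Hqi : pairing b q \isn't a Num.int.
  apply/negP=> /intrP [m Hm]; case: (Huniq b m Hb Hm) => [][Hbe _].
    by move/eqP: Hba.
  by move/eqP: Hbna.
have Hfix := act_s_fix Hq.
set Mf := F b (act s bp).
have HM e : 0 < e -> e <= 1 ->
    Mf%:~R <= pairing b q + e * (pairing b (act s bp) - pairing b q) < Mf%:~R + 1.
  move=> He0 He1.
  have Hv : F b (act s (q + e *: (bp - q))) = Mf.
    rewrite /Mf !(@F_act _ _ D s b _ inWt_s Hb) /=; congr (_ + _).
    by rewrite alcove_conv // inW_roots //; case: inWt_s.
  have Hp : pairing b (act s (q + e *: (bp - q))) =
      pairing b q + e * (pairing b (act s bp) - pairing b q).
    by rewrite act_s_aff // pairingDr pairingZr pairingBr.
  rewrite -Hp -intrD1 -Hv; exact: floor_itv.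
have /andP[H1 H2] := small_lim HM.
have Hlt : pairing b q < Mf%:~R + 1.
  rewrite lt_neqAle H2 andbT; apply/eqP=> He; move/negP: Hqi; apply.
  by rewrite He -intrD1 intr_int.
have HMf : Num.floor (pairing b q) = Mf by apply: floor_def; rewrite H1 intrD1.
have /andP[H3 H4] := Hcl b Hb.
have Hlt2 : pairing b q < (F b bp)%:~R + 1.
  rewrite lt_neqAle H4 andbT; apply/eqP=> He; move/negP: Hqi; apply.
  by rewrite He -intrD1 intr_int.
have Hm : Num.floor (pairing b q) = F b bp by apply: floor_def; rewrite H3 intrD1.
by rewrite -HMf Hm.
Qed.

Lemma sigN b : b \in rts -> sig (- b) = - sig b.
Proof.
move=> Hb; rewrite /sig (@F_neg _ _ D s) //; last exact: inWt_s.
rewrite (@F_neg0 _ _ D) //; ring.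
Qed.

Lemma sig_al : -1 <= sig al <= 1.
Proof.
case: Hwall => Ha [q [Hq Hcl _]].
have /andP[H3 H4] := Hcl al Ha; rewrite Hq in H3 H4.
rewrite /sig /F.
have -> : pairing al (act s bp) = 2 * k%:~R - pairing al bp.
  rewrite /act /saff /= reflmx_col pairingDr pairingBr pairingZr (pairing_cor Ha) pairingZr.
  rewrite (pairing_cor Ha); ring.
have /andP[Hb1 Hb2] := floor_itv (pairing al bp).
have /andP[Hc1 Hc2] := floor_itv (2 * k%:~R - pairing al bp).
rewrite /F in H3 H4.
set f := Num.floor (pairing al bp) in Hb1 Hb2 H3 H4 *.
set g := Num.floor (2 * k%:~R - pairing al bp) in Hc1 Hc2 *.
rewrite !intrD in Hb2 Hc2 H4.
have Hb3 : (f%:~R : R) != pairing al bp.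
  apply/eqP=> Heq; move/negP: (basept_generic Ha); apply.
  by rewrite -Heq intr_int.
have Hb1' : (f%:~R : R) < pairing al bp by rewrite lt_neqAle Hb3 Hb1.
have two : ((2 : int)%:~R : R) = 2 by [].
have A1 : (g%:~R : R) < (f + 2)%:~R by rewrite intrD two; lra.
have A2 : ((f - 2)%:~R : R) < g%:~R by rewrite intrB two; lra.
rewrite ltr_int in A1; rewrite ltr_int in A2.
apply/andP; split; lia.
Qed.

Lemma sig_bound b : b \in rts -> -1 <= sig b <= 1.
Proof.
move=> Hb; have [->|Hba] := eqVneq b al; first exact: sig_al.
have [Hbn|Hbna] := eqVneq b (- al).
  rewrite Hbn sigN ?al_root //; have := sig_al; case/andP=> ? ?.
  apply/andP; split; lia.
by rewrite wall_F.
Qed.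

End Wall.

Lemma psum_seq_eq0 (R : realDomainType) (T : eqType) (s : seq T) (f : T -> R) :
  (forall x, x \in s -> 0 <= f x) -> \sum_(x <- s) f x = 0 -> forall x, x \in s -> f x = 0.
Proof.
elim: s => [|y s IH] //= Hpos; rewrite big_cons => Hs x.
have Hy : 0 <= f y by apply: Hpos; rewrite inE eqxx.
have Hs0 : 0 <= \sum_(z <- s) f z.
  by rewrite big_seq sumr_ge0 // => z Hz; apply: Hpos; rewrite inE Hz orbT.
have Hy0 : f y = 0 by lra.
have Hs1 : \sum_(z <- s) f z = 0 by lra.
rewrite inE => /orP[/eqP -> //|Hx].
by apply: IH => // z Hz; apply: Hpos; rewrite inE Hz orbT.
Qed.

Lemma rowext (R : realType) n (x y : 'rV[R]_n) : (forall u, pairing x u = pairing y u) -> x = y.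
Proof.
move=> H; apply/rowP => j; have := H (delta_mx j 0).
by rewrite /pairing -!colE !mxE.
Qed.

Section Form.
Variables (R : realType) (n : nat) (D : AffRootData R n).
Local Notation rts := (roots D).
Local Notation cr := (cor D).
Local Notation bp := (basept D).
Implicit Types (a b : 'rV[R]_n) (u v : 'cV[R]_n) (M : 'M[R]_n).

Lemma perm_W M : inW D M -> perm_eq [seq g *m M | g <- rts] rts.
Proof.
move=> HM; have uM := inW_unit HM.
apply: uniq_perm.
- rewrite map_inj_uniq; first exact: roots_uniq.
  move=> g1 g2 H.
  by rewrite -(mulmxK uM g1) H mulmxK.
- exact: roots_uniq.
move=> x; apply/mapP/idP => [[g Hg ->]|Hx]; first exact: inW_roots.
by exists (x *m invmx M); [apply: inW_rootsV | rewrite mulmxKV].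
Qed.

Lemma sum_W (T : nmodType) M (h : 'rV[R]_n -> T) : inW D M ->
  \sum_(g <- rts) h (g *m M) = \sum_(g <- rts) h g.
Proof. by move=> HM; rewrite -[RHS](perm_big _ (perm_W HM)) big_map. Qed.

Lemma perm_N : perm_eq [seq - g | g <- rts] rts.
Proof.
apply: uniq_perm.
- rewrite map_inj_uniq; first exact: roots_uniq.
  exact: oppr_inj.
- exact: roots_uniq.
move=> x; apply/mapP/idP => [[g Hg ->]|Hx]; first exact: roots_neg.
by exists (- x); [apply: roots_neg | rewrite opprK].
Qed.

Definition C u v := \sum_(g <- rts) pairing g u * pairing g v.

Lemma CC u v : C u v = C v u.
Proof. by apply: eq_bigr => g _; rewrite mulrC. Qed.
Lemma CDl u1 u2 v : C (u1 + u2) v = C u1 v + C u2 v.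
Proof. by rewrite /C -big_split; apply: eq_bigr => g _; rewrite pairingDr mulrDl. Qed.
Lemma CNl u v : C (- u) v = - C u v.
Proof. by rewrite /C -sumrN; apply: eq_bigr => g _; rewrite pairingNr mulNr. Qed.
Lemma CZl (c : R) u v : C (c *: u) v = c * C u v.
Proof. by rewrite /C mulr_sumr; apply: eq_bigr => g _; rewrite pairingZr mulrA. Qed.
Lemma CBl u1 u2 v : C (u1 - u2) v = C u1 v - C u2 v.
Proof. by rewrite CDl CNl. Qed.
Lemma CDr u v1 v2 : C u (v1 + v2) = C u v1 + C u v2.
Proof. by rewrite CC CDl !(CC u). Qed.
Lemma CNr u v : C u (- v) = - C u v.
Proof. by rewrite CC CNl CC. Qed.
Lemma CZr (c : R) u v : C u (c *: v) = c * C u v.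
Proof. by rewrite CC CZl CC. Qed.
Lemma CBr u v1 v2 : C u (v1 - v2) = C u v1 - C u v2.
Proof. by rewrite CDr CNr. Qed.

Lemma C_ge0 u : 0 <= C u u.
Proof. by rewrite /C sumr_ge0 // => g _; rewrite -expr2 sqr_ge0. Qed.

Lemma C_eq0 u : C u u = 0 -> u = 0.
Proof.
move=> H0; apply: roots_span => a Ha.
have Hp : forall g, g \in rts -> 0 <= pairing g u * pairing g u.
  by move=> g _; rewrite -expr2 sqr_ge0.
have := psum_seq_eq0 Hp H0 Ha.
by move/eqP; rewrite mulf_eq0 orbb; move/eqP.
Qed.

Lemma C_gt0 u : u != 0 -> 0 < C u u.
Proof. by move=> Hu; rewrite lt_neqAle C_ge0 andbT eq_sym; apply/eqP => /C_eq0 /eqP; apply/negP. Qed.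

Lemma cor_nz a : a \in rts -> cr a != 0.
Proof.
move=> Ha; apply/eqP=> H0; have := pairing_cor Ha; rewrite H0 pairing0r.
by move/eqP; rewrite eq_sym pnatr_eq0.
Qed.

Lemma C_refl a u v : a \in rts -> C (rfl D a *m u) (rfl D a *m v) = C u v.
Proof.
move=> Ha; rewrite /C -(sum_W (fun g => pairing g u * pairing g v) (@genW_gen _ _ D (inRoots D) a Ha)).
by apply: eq_bigr => g _; rewrite !pairing_mulmx.
Qed.

Lemma C_key b u : b \in rts -> pairing b u * C (cr b) (cr b) = 2 * C u (cr b).
Proof.
move=> Hb; have := C_refl u (cr b) Hb.
rewrite /rfl !reflmx_col (pairing_cor Hb).
have -> : cr b - 2 *: cr b = - cr b by apply/matrixP=> i j; rewrite !mxE; ring.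
rewrite CNr CBl CZl => H; lra.
Qed.

End Form.

Section Str.
Variables (R : realType) (n : nat) (D : AffRootData R n).
Local Notation rts := (roots D).
Local Notation cr := (cor D).
Local Notation bp := (basept D).
Local Notation C := (C D).
Implicit Types (a b : 'rV[R]_n) (u v : 'cV[R]_n) (M : 'M[R]_n).

Lemma str_step a b : a \in rts -> b \in rts -> b != a -> b != - a ->
  0 < pairing b (cr a) -> b - a \in rts.
Proof.
move=> Ha Hb Hba Hbna Hpos.
have Ca := C_gt0 D (cor_nz Ha); have Cb := C_gt0 D (cor_nz Hb).
have K1 := C_key (cr a) Hb; have K2 := C_key (cr b) Ha.
rewrite (CC D (cr b)) in K2.
set X := C (cr a) (cr b) in K1 K2.
set Ar := pairing b (cr a) in Hpos K1; set Br := pairing a (cr b) in K2.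
have [A HA] := intrP (roots_int Ha Hb); have [B HB] := intrP (roots_int Hb Ha).
rewrite -/Ar in HA; rewrite -/Br in HB.
have [A1|A1] := eqVneq A 1.
  have := roots_refl Ha Hb; rewrite reflmx_row -/Ar HA A1 scale1r //.
have [B1|B1] := eqVneq B 1.
  have := roots_refl Hb Ha; rewrite reflmx_row -/Br HB B1 scale1r => H.
  by have := roots_neg H; rewrite opprB.
exfalso.
have Apos : 0 < A by move: Hpos; rewrite HA ltr0z.
have A2 : 2 <= A by lia.
have Xpos : 0 < X by nra.
have Bposr : 0 < Br by nra.
have Bpos : 0 < B by move: Bposr; rewrite HB ltr0z.
have B2 : 2 <= B by lia.
have A2r : 2 <= Ar by rewrite HA -[2]/((2:int)%:~R) ler_int.
have B2r : 2 <= Br by rewrite HB -[2]/((2:int)%:~R) ler_int.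
set Ca' := C (cr a) (cr a) in Ca K2; set Cb' := C (cr b) (cr b) in Cb K1.
have HX : Ca' * Cb' <= X * X.
  have E : 4 * (X * X) = (Ar * Br) * (Ca' * Cb') by nra.
  have E2 : 4 <= Ar * Br by nra.
  have E3 : 0 < Ca' * Cb' by nra.
  nra.
set w := Cb' *: cr a - X *: cr b.
have Hw : C w w = Cb' * (Ca' * Cb' - X * X).
  rewrite /w CBl !CBr !CZl !CZr -/Ca' -/Cb' -/X (CC D (cr b)) -/X; ring.
have Hw0 : C w w = 0.
  apply/eqP; rewrite eq_le C_ge0 andbT Hw; nra.
have Hw1 := C_eq0 Hw0.
have Cbnz : Cb' != 0 by rewrite gt_eqF.
have Can : Ca' != 0 by rewrite gt_eqF.
have Hca : cr a = (X / Cb') *: cr b.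
  apply/matrixP => i j; have := congr1 (fun m : 'cV[R]_n => m i j) Hw1; rewrite /w !mxE /= => E.
  have E' : X * cr b i j = Cb' * cr a i j by lra.
  by rewrite mulrAC E' mulrAC divff ?mul1r.
have Hab : a = (X / Ca') *: b.
  apply: rowext => u; rewrite pairingZl.
  have K3 := C_key u Ha; have K4 := C_key u Hb.
  rewrite -/Ca' Hca CZr in K3; rewrite -/Cb' in K4.
  apply: (mulIf Can); rewrite K3.
  have -> : 2 * (X / Cb' * C u (cr b)) = X / Cb' * (2 * C u (cr b)) by ring.
  by rewrite -K4; field; rewrite Can Cbnz.
have Hr : (X / Ca') *: b \in rts by rewrite -Hab.
case: (roots_reduced Hb Hr) => Hc; rewrite Hc ?scale1r ?scaleN1r in Hab.
  by move/eqP: Hba; apply; rewrite Hab.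
by move/eqP: Hbna; apply; rewrite Hab opprK.
Qed.


Lemma simple_pos j b : simpleroot D j -> posroot D b -> (forall c : R, b != c *: j) ->
  posroot D (b *m rfl D j).
Proof.
move=> [Hjp Hjind] Hbp Hmult.
have Hjr : j \in rts by case/andP: Hjp.
have Hbr : b \in rts by case/andP: Hbp.
have Hjneg : pairing j bp < 0 by case/andP: Hjp.
have Hbneg : pairing b bp < 0 by case/andP: Hbp.
have Hrefl : b *m rfl D j \in rts by apply: roots_refl.
rewrite /rfl reflmx_row in Hrefl *.
have [m Hm] := intrP (roots_int Hjr Hbr).
have [Hm0|Hm0] := lerP m 0.
  apply/andP; split => //.
  rewrite pairingBl pairingZl Hm.
  have : (m%:~R : R) <= 0 by rewrite lerz0.
  nra.
have [N HN] : exists N : nat, m = N%:Z by exists `|m|%N; lia.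
have key : forall i, (i <= N)%N -> posroot D (b - i%:R *: j).
  elim/ltn_ind => i IH HiN.
  case: i IH HiN => [|i] IH HiN; first by rewrite scale0r subr0.
  have Hb1 : posroot D (b - i%:R *: j) by apply: IH => //; lia.
  have Hb1r : b - i%:R *: j \in rts by case/andP: Hb1.
  have Hroot : b - i.+1%:R *: j \in rts.
    have [Hlt|Hge] := ltnP i.*2 N.
      have E : b - i.+1%:R *: j = (b - i%:R *: j) - j.
        by apply/rowP => k; rewrite !mxE -natr1; ring.
      rewrite E; apply: str_step => //.
      - apply/eqP => Ej; move/eqP: (Hmult i.+1%:R); apply.
        by apply/rowP => k; have := congr1 (fun r : 'rV[R]_n => r 0 k) Ej; rewrite !mxE -natr1 => Ek; lra.
      - apply/eqP => Ej; move/eqP: (Hmult (i%:R - 1)); apply.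
        by apply/rowP => k; have := congr1 (fun r : 'rV[R]_n => r 0 k) Ej; rewrite !mxE => Ek; lra.
      - rewrite pairingBl pairingZl (pairing_cor Hjr) Hm HN.
        have : (i.*2 < N)%N := Hlt.
        rewrite -(ltr_nat R) => H; rewrite -muln2 natrM in H; lra.
    have Hi2 : (N - i.+1 < i.+1)%N by lia.
    have Hb2 : posroot D (b - (N - i.+1)%:R *: j) by apply: IH => //; lia.
    have Hb2r : b - (N - i.+1)%:R *: j \in rts by case/andP: Hb2.
    have := roots_refl Hjr Hb2r; rewrite reflmx_row.
    suff -> : b - (N - i.+1)%:R *: j - pairing (b - (N - i.+1)%:R *: j) (cr j) *: j =
              b - i.+1%:R *: j by [].
    rewrite pairingBl pairingZl (pairing_cor Hjr) Hm HN natrB //.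
    by apply/rowP => k; rewrite !mxE; ring.
  apply/andP; split => //; rewrite ltNge; apply/negP => Hge.
  have Hnz := pair_bp_nz Hroot.
  have Hneg : posroot D (- (b - i.+1%:R *: j)).
    by rewrite /posroot roots_neg // pairingNl oppr_lt0 lt_neqAle eq_sym Hnz Hge.
  apply: Hjind; exists (b - i%:R *: j), (- (b - i.+1%:R *: j)); split => //.
  by apply/rowP => k; rewrite !mxE -natr1; ring.
have := key N (leqnn N).
suff -> : b - N%:R *: j = b - pairing b (cr j) *: j by [].
by rewrite Hm HN.
Qed.

End Str.

Section Span.
Variables (R : realType) (n : nat).
Implicit Types (a b x y : 'rV[R]_n) (J : seq 'rV[R]_n).

Lemma span0 J : in_spanJ J 0.
Proof. by exists (fun _ => 0); rewrite big1 // => b _; rewrite scale0r. Qed.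

Lemma spanD J x y : in_spanJ J x -> in_spanJ J y -> in_spanJ J (x + y).
Proof.
move=> [c1 ->] [c2 ->]; exists (fun b => c1 b + c2 b).
by rewrite -big_split; apply: eq_bigr => b _; rewrite scalerDl.
Qed.

Lemma spanZ J (r : R) x : in_spanJ J x -> in_spanJ J (r *: x).
Proof.
move=> [c ->]; exists (fun b => r * c b).
by rewrite scaler_sumr; apply: eq_bigr => b _; rewrite scalerA.
Qed.

Lemma spanB J x y : in_spanJ J x -> in_spanJ J y -> in_spanJ J (x - y).
Proof. by move=> Hx Hy; apply: spanD => //; rewrite -scaleN1r; apply: spanZ. Qed.

Lemma sum_ind_count (s : seq 'rV[R]_n) a (r : R) :
  \sum_(x <- s) (if x == a then r else 0) *: x = ((count_mem a s)%:R * r) *: a.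
Proof.
elim: s => [|y s IH]; first by rewrite big_nil mul0r scale0r.
rewrite big_cons IH /=; have [->|Hya] := eqVneq y a.
  by rewrite ?eqxx /= natrD mulrDl mul1r scalerDl.
by rewrite /= scale0r add0r add0n.
Qed.

Lemma span_mem J a : a \in J -> in_spanJ J a.
Proof.
move=> Ha; exists (fun x => if x == a then ((count_mem a J)%:R)^-1 else 0).
rewrite sum_ind_count divff ?scale1r //.
by rewrite pnatr_eq0 -lt0n -has_count has_pred1.
Qed.

Lemma span_map J (A : 'M[R]_n) b : (forall j, j \in J -> j *m A \in J) ->
  in_spanJ J b -> in_spanJ J (b *m A).
Proof.
move=> HA [c ->]; rewrite mulmx_suml big_seq.
apply: (big_ind (in_spanJ J)); [exact: span0 | exact: spanD|].
by move=> j Hj; rewrite -scalemxAl; apply: spanZ; apply: span_mem; apply: HA.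
Qed.

End Span.

Section WJ.
Variables (R : realType) (n : nat) (D : AffRootData R n).
Local Notation rts := (roots D).
Local Notation cr := (cor D).
Local Notation Th := (theta D).
Local Notation bp := (basept D).
Implicit Types (a b c : 'rV[R]_n) (u v : 'cV[R]_n) (M : 'M[R]_n) (J : seq 'rV[R]_n).

Lemma WJ_pos J M b : (forall a, a \in J -> simpleroot D a) -> inWJ D J M ->
  posroot D b -> ~ in_spanJ J b -> posroot D (b *m M) /\ ~ in_spanJ J (b *m M).
Proof.
move=> HJ HM; elim: HM b => [|a w Ha _ IH] b Hb Hns; first by rewrite mulmx1.
rewrite mulmxA; apply: IH.
  apply: simple_pos => //; first exact: HJ.
  move=> r; apply/eqP => Er; apply: Hns; rewrite Er; apply: spanZ; exact: span_mem.
move=> Hsp; apply: Hns.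
have -> : b = b *m reflmx a (cr a) + pairing b (cr a) *: a by rewrite reflmx_row subrK.
by apply: spanD => //; apply: spanZ; apply: span_mem.
Qed.

Lemma floor_neg1 (x : R) : Num.floor x = -1 -> x < 0.
Proof. by move=> H; have /andP[_] := floor_itv x; rewrite H. Qed.

Lemma posroot_Th c : posroot D c -> posroot D (c *m Th).
Proof.
move=> Hc; have Hcr : c \in rts by case/andP: Hc.
apply/andP; split; first by rewrite roots_Th.
apply: floor_neg1; rewrite pairing_mulmx theta_alcove //.
exact: (F_bp_pos Hc).
Qed.

Lemma posroot_ThV c : posroot D c -> posroot D (c *m invmx Th).
Proof.
move=> Hc; have Hcr : c \in rts by case/andP: Hc.
apply/andP; split; first by rewrite roots_ThV.
apply: floor_neg1; rewrite -theta_alcove ?roots_ThV // -pairing_mulmx mulmxKV ?theta_unit //.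
exact: (F_bp_pos Hc).
Qed.

Variable J : seq 'rV[R]_n.
Hypothesis HJth : forall a, (a \in J) = (a *m invmx Th \in J).

Lemma nspan_Th c : ~ in_spanJ J c -> ~ in_spanJ J (c *m Th).
Proof.
move=> Hn Hs; apply: Hn; have := span_map (A := invmx Th) _ Hs.
rewrite mulmxK ?theta_unit //; apply => j Hj; by rewrite -HJth.
Qed.

Lemma nspan_ThV c : ~ in_spanJ J c -> ~ in_spanJ J (c *m invmx Th).
Proof.
move=> Hn Hs; apply: Hn; have := span_map (A := Th) _ Hs.
rewrite mulmxKV ?theta_unit //; apply => j Hj; by rewrite HJth mulmxK ?theta_unit.
Qed.

End WJ.

Section Main.
Variables (R : realType) (n : nat) (D : AffRootData R n).
Local Notation rts := (roots D).
Local Notation cr := (cor D).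
Local Notation Th := (theta D).
Local Notation bp := (basept D).
Implicit Types (a b c : 'rV[R]_n) (u v : 'cV[R]_n) (M : 'M[R]_n).

Variables (al : 'rV[R]_n) (k : int) (y : Wt R n) (J : seq 'rV[R]_n) (w : 'M[R]_n).
Hypothesis Hwall : wall D al k.
Hypothesis Hy : inWt D y.
Hypothesis HJ : forall a, a \in J -> simpleroot D a.
Hypothesis HJth : forall a, (a \in J) = (a *m invmx Th \in J).
Hypothesis Hw : inW D w.
Hypothesis HWJ : inWJ D J (invmx w *m y.1 *m deltaW D w).

Local Notation s := (saff D al k).
Local Notation s' := (delta D s).
Local Notation sg := (sig D al k).

Let Ha : al \in rts := al_root Hwall.
Let Hs : inWt D s := inWt_s Hwall.
Let Hs' : inWt D s' := inWt_delta Hs.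
Let Hys' : inWt D (mulWt y s') := inWt_mul Hy Hs'.

Definition u0 := act y bp.
Definition u := act (mulWt y s') bp.
Definition sp := act s bp.
Definition AA b : int := F b u0 - F b bp.
Definition psi b := b *m y.1 *m Th.
Definition phi b := b *m invmx Th *m invmx y.1.
Definition Pset c := posroot D (c *m w) /\ ~ in_spanJ J (c *m w).

Let uY : y.1 \in unitmx := inW_unit (proj1 Hy).
Let uTh : Th \in unitmx := theta_unit D.
Let uw : w \in unitmx := inW_unit Hw.

Lemma act_ss v : act s (act s v) = v.
Proof.
rewrite /act /saff /= mulmxDr mulmxA reflK // mul1mx -addrA.
rewrite reflmx_col pairingZr (pairing_cor Ha).
suff -> : k%:~R *: cr al - k%:~R * 2 *: cr al + k%:~R *: cr al = 0 by rewrite addr0.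
by apply/matrixP=> i j; rewrite !mxE; ring.
Qed.

Lemma bp_act_ss : bp = act s sp.
Proof. by rewrite /sp act_ss. Qed.

Lemma F_ThV d : d \in rts -> F d (invmx Th *m bp) = F d bp.
Proof.
move=> Hd; rewrite /F -pairing_mulmx -theta_alcove ?roots_ThV //.
by rewrite -pairing_mulmx mulmxKV.
Qed.

Lemma F_Th b : b \in rts -> F (b *m Th) bp = F b bp.
Proof. by move=> Hb; rewrite /F pairing_mulmx theta_alcove. Qed.

Lemma sig_s' b : b \in rts -> F b (act s' bp) - F b bp = sg (b *m Th).
Proof.
move=> Hb; have HbT : b *m Th \in rts by rewrite roots_Th.
have -> : act s' bp = Th *m act s (invmx Th *m bp).
  rewrite /act /delta /deltaW /= mulmxDr !mulmxA.
  by rewrite -[Th *m _ *m invmx Th *m bp]mulmxA.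
rewrite {1}/F -pairing_mulmx -/(F _ _) (F_act _ Hs HbT) F_ThV; last first.
  by apply: inW_roots => //; case: Hs.
rewrite /sg /sig -/sp /sp (F_act _ Hs HbT) F_Th //; ring.
Qed.

Lemma tau b : b \in rts -> F b u - F b u0 = sg (psi b).
Proof.
move=> Hb; have HbY : b *m y.1 \in rts by apply: inW_roots => //; case: Hy.
rewrite /u /u0 act_mul !(F_act _ Hy Hb) -(sig_s' HbY) /psi; ring.
Qed.


Lemma psi_root b : b \in rts -> psi b \in rts.
Proof. by move=> Hb; rewrite /psi roots_Th; apply: inW_roots => //; case: Hy. Qed.

Lemma psiN b : psi (- b) = - psi b.
Proof. by rewrite /psi !mulNmx. Qed.

Lemma phiK b : psi (phi b) = b.
Proof. by rewrite /psi /phi mulmxKV // mulmxKV. Qed.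

Lemma psiK b : phi (psi b) = b.
Proof. by rewrite /psi /phi mulmxK // mulmxK. Qed.

Lemma psi_inj b1 b2 : psi b1 = psi b2 -> b1 = b2.
Proof. by move=> H; rewrite -(psiK b1) H psiK. Qed.

Let HJr : forall a, a \in J -> a \in rts.
Proof. by move=> a /HJ [/andP []]. Qed.

Let uM : invmx w *m y.1 *m deltaW D w \in unitmx.
Proof. exact: (genW_unit HJr HWJ). Qed.

Lemma Pset_root c : Pset c -> c \in rts.
Proof.
move=> [/andP [Hc _] _]; have := inW_rootsV Hw Hc.
by rewrite mulmxK.
Qed.

Lemma Pset_psi c : Pset c -> Pset (psi c).
Proof.
move=> [Hp Hn].
have E : psi c *m w = (c *m w) *m (invmx w *m y.1 *m deltaW D w) *m Th.
  by rewrite /psi /deltaW !mulmxA (mulmxK uw) (mulmxKV uTh).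
have [Hp2 Hn2] := WJ_pos HJ HWJ Hp Hn.
rewrite /Pset E; split; first exact: posroot_Th.
exact: nspan_Th.
Qed.

Lemma Pset_phi c : Pset c -> Pset (phi c).
Proof.
move=> [Hp Hn].
set M := invmx w *m y.1 *m deltaW D w.
have E1 : phi c *m w *m M = c *m w *m invmx Th.
  by rewrite /M /phi /deltaW !mulmxA (mulmxK uw) (mulmxKV uY) (mulmxKV uTh).
have E : phi c *m w = (c *m w *m invmx Th) *m invmx M.
  by rewrite -E1 mulmxK.
have HMi : inWJ D J (invmx M) by apply: genW_inv.
have [Hp2 Hn2] := WJ_pos HJ HMi (posroot_ThV Hp) (nspan_ThV HJth Hn).
by rewrite /Pset E.
Qed.

Lemma Pset_disj c : Pset c -> Pset (- c) -> False.
Proof.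
move=> [Hp _] [Hp2 _]; have Hr : c *m w \in rts by case/andP: Hp.
by move: Hp2; rewrite mulNmx posrootN // Hp.
Qed.

Lemma Fn_bp b : b \in rts -> F (- b) bp = - F b bp - 1.
Proof. exact: F_neg0. Qed.
Lemma Fn_sp b : b \in rts -> F (- b) sp = - F b sp - 1.
Proof. exact: F_neg. Qed.
Lemma Fn_u0 b : b \in rts -> F (- b) u0 = - F b u0 - 1.
Proof. exact: F_neg. Qed.
Lemma Fn_u b : b \in rts -> F (- b) u = - F b u - 1.
Proof. exact: F_neg. Qed.

Lemma AAN b : b \in rts -> AA (- b) = - AA b.
Proof. by move=> Hb; rewrite /AA Fn_u0 // Fn_bp //; ring. Qed.

Lemma Fu b : b \in rts -> F b u = F b u0 + sg (psi b).
Proof. by move=> Hb; rewrite -tau //; ring. Qed.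
Lemma Fsp b : F b sp = F b bp + sg b.
Proof. by rewrite /sig -/sp; ring. Qed.


Lemma len_int x : ((len D x)%:R : int) =
  \sum_(a <- rts | posroot D a) `|F a (act x bp) - F a bp|.
Proof. by rewrite /len natr_sum; apply: eq_bigr => a _; rewrite natz abszE. Qed.

Lemma half_sum (h : 'rV[R]_n -> int) : (forall a, a \in rts -> h (- a) = h a) ->
  \sum_(a <- rts) h a = (\sum_(a <- rts | posroot D a) h a) *+ 2.
Proof.
move=> Hh; rewrite (bigID (posroot D)) /= mulr2n; congr (_ + _).
rewrite -[in LHS](perm_big _ (perm_N D)) big_map.
rewrite big_seq_cond [RHS]big_seq_cond; apply: eq_big => a.
  by case Ha': (a \in rts) => //=; rewrite posrootN // negbK.
by case/andP => Ha' _; rewrite Hh.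
Qed.

Definition gg b : int := `|F b u - F b sp|.
Definition g0 b : int := `|AA b|.

Lemma gg_even b : b \in rts -> gg (- b) = gg b.
Proof. by move=> Hb; rewrite /gg Fn_u // Fn_sp // -normrN; congr `|_|; ring. Qed.
Lemma g0_even b : b \in rts -> g0 (- b) = g0 b.
Proof. by move=> Hb; rewrite /g0 AAN // normrN. Qed.

Lemma len_z : ((len D (mulWt s (mulWt y s')))%:R : int) *+ 2 = \sum_(b <- rts) gg b.
Proof.
have HS : inW D (rfl D al) by apply: genW_gen.
rewrite len_int -(sum_W _ HS).
rewrite (half_sum (h := fun b => gg (b *m rfl D al))); last first.
  by move=> a Har; rewrite mulNmx gg_even //; apply: inW_roots.
congr (_ *+ 2); rewrite big_seq_cond [RHS]big_seq_cond; apply: eq_bigr => a /andP [Har _].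
rewrite act_mul -/u [in X in _ - X]bp_act_ss (F_act _ Hs Har) (F_act _ Hs Har) /gg.
congr `|_|; ring.
Qed.


Lemma len_y : ((len D y)%:R : int) *+ 2 = \sum_(b <- rts) g0 b.
Proof.
rewrite len_int (half_sum (h := g0)); last by move=> a Har; rewrite g0_even.
by [].
Qed.

Lemma sum_le_elem (T : eqType) (t : seq T) (h : T -> int) x0 :
  (forall x, x \in t -> 0 <= h x) -> x0 \in t -> h x0 <= \sum_(x <- t) h x.
Proof.
elim: t => [|z t IH] //= Hpos; rewrite big_cons inE => /orP [/eqP ->|Hx].
  rewrite lerDl big_seq sumr_ge0 // => x Hx; apply: Hpos.
  by rewrite inE Hx orbT.
have Hpos' : forall x, x \in t -> 0 <= h x by move=> x Hx'; apply: Hpos; rewrite inE Hx' orbT.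
have := IH Hpos' Hx.
move=> H1; have H2 : 0 <= h z by apply: Hpos; rewrite mem_head.
exact: ler_wpDl.
Qed.

Lemma sum_strict (f g : 'rV[R]_n -> int) b0 :
  (forall b, b \in rts -> f b <= g b) -> b0 \in rts -> f b0 < g b0 ->
  \sum_(b <- rts) f b < \sum_(b <- rts) g b.
Proof.
move=> Hle Hb0 Hlt; rewrite -subr_gt0 -sumrB.
apply: (lt_le_trans _ (sum_le_elem (h := fun b => g b - f b) _ Hb0)).
  by rewrite subr_gt0.
by move=> x Hx; rewrite subr_ge0; apply: Hle.
Qed.

Lemma h_pos (a d : int) : 0 <= a -> d = 1 -> 0 <= a * d.
Proof. by move=> Hx ->; rewrite mulr1. Qed.
Lemma h_neg (a d : int) : 0 <= a -> d = -1 -> 0 <= (- a) * d.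
Proof. by move=> Hx ->; rewrite mulrN1 opprK. Qed.
Lemma h_zero (a d : int) : d = 0 -> 0 <= a * d.
Proof. by move=> ->; rewrite mulr0. Qed.

Lemma absD (a d : int) : 0 <= a * d -> `|a| <= `|a + d|.
Proof. move=> H; nia. Qed.

Lemma gg_AA b : b \in rts -> gg b = `|AA b + (sg (psi b) - sg b)|.
Proof. by move=> Hb; rewrite /gg Fu // Fsp /AA; congr `|_|; ring. Qed.

Lemma sg_nz b : b \in rts -> sg b != 0 -> b = al \/ b = - al.
Proof.
move=> Hb Hnz; have [->|H1] := eqVneq b al; first by left.
have [->|H2] := eqVneq b (- al); first by right.
by move: Hnz; rewrite (wall_F Hwall Hb H1 H2) eqxx.
Qed.

Lemma pm_cases b c : b = al \/ b = - al -> c = al \/ c = - al -> b = c \/ b = - c.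
Proof. by move=> [->|->] [->|->]; rewrite ?opprK; tauto. Qed.

Lemma phiN b : phi (- b) = - phi b.
Proof. by rewrite /phi !mulNmx. Qed.

Lemma sgb b : b \in rts -> -1 <= sg b <= 1.
Proof. exact: sig_bound. Qed.

Hypothesis HA : forall c, Pset c -> 0 <= AA c.
Hypothesis Hsum : \sum_(b <- rts) gg b = \sum_(b <- rts) g0 b.

Lemma no_strict : (forall b, b \in rts -> g0 b <= gg b) ->
  forall b0, b0 \in rts -> g0 b0 < gg b0 -> False.
Proof.
move=> Hle b0 Hb0 Hlt; have := sum_strict Hle Hb0 Hlt.
by rewrite Hsum ltxx.
Qed.

Lemma main_claim c : Pset c -> F c sp <= F c u.
Proof.
move=> Hc; have Hcr := Pset_root Hc; have A0 := HA Hc.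
rewrite Fsp Fu //.
have Hpr := psi_root Hcr.
have /andP [B1 B2] := sgb Hcr; have /andP [B3 B4] := sgb Hpr.
suff : 0 <= AA c + (sg (psi c) - sg c) by rewrite /AA; lia.
have [Hle|Hlt] := lerP (sg c) (sg (psi c)); first lia.
have [Hs1z|Hs1nz] := eqVneq (sg c) 0.
  have Hs2 : sg (psi c) = -1 by lia.
  have [A1|A1] := lerP 1 (AA c); first lia.
  have Ac0 : AA c = 0 by lia.
  exfalso.
  set c2 := psi c in Hpr Hs2 B3 B4.
  have Hc2 : Pset c2 by apply: Pset_psi.
  have Hc2pm : c2 = al \/ c2 = - al by apply: sg_nz => //; rewrite Hs2.
  have Hpc2r := psi_root Hpr.
  have Hs3 : sg (psi c2) = 0.
    apply/eqP; apply/negPn/negP => Hnz.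
    have := pm_cases (sg_nz Hpc2r Hnz) Hc2pm; case => E.
      have E' : c2 = c by apply: psi_inj; rewrite E.
      by move: Hs1z; rewrite -E' Hs2.
    by apply: (Pset_disj Hc2); rewrite -E; apply: Pset_psi.
  apply: (no_strict _ (b0 := c)) => //; last first.
    by rewrite gg_AA // /g0 Ac0 Hs1z Hs2.
  move=> b Hb; rewrite gg_AA // /g0; apply: absD.
  have [->|Hb1] := eqVneq b c; first by rewrite Ac0 mul0r.
  have [->|Hb2] := eqVneq b (- c); first by rewrite AAN // Ac0 oppr0 mul0r.
  have [->|Hb3] := eqVneq b c2.
    by rewrite Hs3 Hs2; apply: h_pos (HA Hc2) _; rewrite sub0r opprK.
  have [->|Hb4] := eqVneq b (- c2).
    rewrite psiN sigN // Hs3 sigN // Hs2 AAN //; apply: h_neg (HA Hc2) _.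
    by rewrite oppr0 opprK sub0r.
  have Hsb : sg b = 0.
    apply/eqP; apply/negPn/negP => Hnz.
    by case: (pm_cases (sg_nz Hb Hnz) Hc2pm) => E; move: Hb3 Hb4; rewrite E eqxx.
  have Hspb : sg (psi b) = 0.
    apply/eqP; apply/negPn/negP => Hnz.
    case: (pm_cases (sg_nz (psi_root Hb) Hnz) Hc2pm) => E.
      by move: Hb1; rewrite (psi_inj E) eqxx.
    by move: Hb2; rewrite -psiN in E; rewrite (psi_inj E) eqxx.
  by rewrite Hsb Hspb; apply: h_zero; rewrite subr0.
have Hcpm := sg_nz Hcr Hs1nz.
have [Hs2z|Hs2nz] := eqVneq (sg (psi c)) 0; last first.
  exfalso; case: (pm_cases (sg_nz Hpr Hs2nz) Hcpm) => E.
    by move: Hlt; rewrite E ltxx.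
  by apply: (Pset_disj Hc); rewrite -E; apply: Pset_psi.
have Hs1 : sg c = 1 by lia.
have [A1|A1] := lerP 1 (AA c); first lia.
have Ac0 : AA c = 0 by lia.
exfalso.
set c2 := phi c.
have Hc2 : Pset c2 by apply: Pset_phi.
have Hc2r := Pset_root Hc2.
have Hpc2 : psi c2 = c by rewrite /c2 phiK.
have Hs3 : sg c2 = 0.
  apply/eqP; apply/negPn/negP => Hnz.
  case: (pm_cases (sg_nz Hc2r Hnz) Hcpm) => E.
    by move: Hs2z; rewrite -E Hpc2 Hs1.
  have Hpc : psi c = - c.
    by rewrite -[c in psi c]opprK -E psiN Hpc2.
  by move: Hs2z; rewrite Hpc sigN // Hs1.
apply: (no_strict _ (b0 := c)) => //; last first.
  by rewrite gg_AA // /g0 Ac0 Hs1 Hs2z.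
move=> b Hb; rewrite gg_AA // /g0; apply: absD.
have [->|Hb1] := eqVneq b c; first by rewrite Ac0 mul0r.
have [->|Hb2] := eqVneq b (- c); first by rewrite AAN // Ac0 oppr0 mul0r.
have [->|Hb3] := eqVneq b c2.
  by rewrite Hpc2 Hs1 Hs3; apply: h_pos (HA Hc2) _; rewrite subr0.
have [->|Hb4] := eqVneq b (- c2).
  rewrite psiN Hpc2 sigN // Hs1 sigN // Hs3 AAN //; apply: h_neg (HA Hc2) _.
  by rewrite oppr0 subr0.
have Hsb : sg b = 0.
  apply/eqP; apply/negPn/negP => Hnz.
  by case: (pm_cases (sg_nz Hb Hnz) Hcpm) => E; move: Hb1 Hb2; rewrite E eqxx.
have Hspb : sg (psi b) = 0.
  apply/eqP; apply/negPn/negP => Hnz.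
  case: (pm_cases (sg_nz (psi_root Hb) Hnz) Hcpm) => E.
    by move: Hb3; rewrite -(psiK b) E eqxx.
  by move: Hb4; rewrite -(psiK b) E phiN eqxx.
by rewrite Hsb Hspb; apply: h_zero; rewrite subr0.
Qed.

End Main.

Unset Implicit Arguments.

Theorem lemma4p4p3 (R : realType) (n : nat) (D : AffRootData R n)
  (y s : Wt R n) (J : seq 'rV[R]_n) (w : 'M[R]_n) :
  inWt D y -> simple_aff D s ->
  len D (mulWt s (mulWt y (delta D s))) = len D y ->
  (forall a, a \in J -> simpleroot D a) ->
  (forall a, (a \in J) = (a *m invmx (theta D) \in J)) ->
  inW D w ->
  JW_alcove D J w y ->
  JW_alcove D J (s.1 *m w) (mulWt s (mulWt y (delta D s))).
Proof.
move=> Hy [al [k [Hwall ->]]] Hlen HJ HJth Hw [HWJ Hk].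
have Ha := al_root Hwall.
have Hs := inWt_s Hwall.
have uw := inW_unit Hw.
have uTh := theta_unit D.
have uS := refl_unit Ha.
have HJr : forall a, a \in J -> a \in roots D by move=> a /HJ [/andP []].
have HA : forall c, Pset D J w c -> 0 <= AA D y c.
  move=> c [Hp Hn]; have := Hk _ Hp Hn.
  rewrite mulmxK // /kalc /kval act1 lerD2r /AA /u0 => H.
  by rewrite subr_ge0.
have Hsum : \sum_(b <- roots D) gg D al k y b = \sum_(b <- roots D) g0 D y b.
  by rewrite -(len_z Hwall Hy) -(len_y Hy) Hlen.
split.
  rewrite /= invmxM // refl_inv // deltaW_mul.
  suff -> : invmx w *m rfl D al *m (rfl D al *m (y.1 *m deltaW D (rfl D al))) *m
      (deltaW D (rfl D al) *m deltaW D w) = invmx w *m y.1 *m deltaW D w by [].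
  rewrite !mulmxA -[invmx w *m rfl D al *m rfl D al]mulmxA reflK // mulmx1.
  by rewrite !(mulmxKV uTh) -[_ *m rfl D al *m rfl D al]mulmxA reflK // mulmx1.
move=> b Hb Hns.
rewrite /= invmxM // refl_inv // mulmxA.
set c := b *m invmx w.
have Hbr : b \in roots D by case/andP: Hb.
have Hcr : c \in roots D by apply: inW_rootsV.
have HcS : c *m rfl D al \in roots D by apply: roots_refl.
have HPc : Pset D J w c by rewrite /Pset /c mulmxKV.
have Hmc := main_claim Hwall Hy HJ HJth Hw HWJ HA Hsum HPc.
rewrite /kalc /kval act1 lerD2r act_mul -/(u D al k y).
rewrite -/(F _ _) -/(F _ _).
rewrite [X in F _ X <= _](bp_act_ss Hwall) (F_act _ Hs HcS) (F_act _ Hs HcS) /=.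
rewrite -mulmxA reflK // mulmx1 lerD2r.
exact: Hmc.
Qed.
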